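(* Let $E_1,H_1,\dots,E_n,H_n$ be logically independent events, $\mathcal F_k=\{E_1|H_1,\dots,E_k|H_k\}$, and $(p_1,\dots,p_n)\in[0,1]^n$ an assessment on $\mathcal F_n$. For each $k=2,\dots,n$, the set of coherent extensions of $(p_1,\dots,p_k)$ to the quasi disjunction $\mathcal D(\mathcal F_k)=\big(\bigvee_{i=1}^kE_iH_i\big)\,|\,\big(\bigvee_{i=1}^kH_i\big)$ is the interval $[l_k,u_k]$ with $l_k=T_0^H(p_1,\dots,p_k)$ and $u_k=S_L(p_1,\dots,p_k)=\min(p_1+\dots+p_k,1)$. *)

(* Defs.v *)
From HB Require Import structures.
From mathcomp Require Import all_boot all_order all_algebra.
Set Implicit Arguments. Unset Strict Implicit. Unset Printing Implicit Defensive.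
Import Order.TTheory GRing.Theory Num.Theory.
Local Open Scope ring_scope.

(* Events are boolean predicates on a sample space T.  A conditional event
   E|H is represented by the pair of events (E, H). *)

(* Logical independence of E_1,H_1,...,E_n,H_n: every one of the 2^(2n)
   constituents (truth-value assignments) is possible. *)
Definition logically_independent (T : Type) (n : nat) (E H : 'I_n -> pred T) :=
  forall f : 'I_n -> bool * bool,
    exists w : T, forall i, E i w = (f i).1 /\ H i w = (f i).2.

(* Coherence (de Finetti / Gilio betting scheme) of an assessment p on the
   family {E_i | H_i : i in I}: for every sub-family J (nonempty) and every
   real stakes s, the random gain G_J = sum_{i in J} s_i H_i (E_i - p_i),
   restricted to the constituents contained in H_J = \/_{i in J} H_i,
   satisfies  min G_J <= 0 <= max G_J. *)
Definition gain (R : numDomainType) (T : Type) (I : finType)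
  (E H : I -> pred T) (p : I -> R) (J : {set I}) (s : I -> R) (w : T) : R :=
  \sum_(i in J) s i * (H i w)%:R * ((E i w)%:R - p i).

Definition coherent (R : numDomainType) (T : Type) (I : finType)
  (E H : I -> pred T) (p : I -> R) : Prop :=
  forall (J : {set I}) (s : I -> R), J != set0 ->
    (exists2 w : T, [exists i in J, H i w] & 0 <= gain E H p J s w) /\
    (exists2 w : T, [exists i in J, H i w] & gain E H p J s w <= 0).

(* The family F_k together with the quasi disjunction
   D(F_k) = (\/_{i<=k} E_i H_i) | (\/_{i<=k} H_i), indexed by option 'I_k
   (None = the quasi disjunction). *)
Definition qdE (T : Type) (n k : nat) (hk : (k <= n)%N) (E H : 'I_n -> pred T)
  : option 'I_k -> pred T :=
  fun o => match o with
  | Some i => E (widen_ord hk i)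
  | None => fun w => [exists i : 'I_k, E (widen_ord hk i) w && H (widen_ord hk i) w]
  end.

Definition qdH (T : Type) (n k : nat) (hk : (k <= n)%N) (H : 'I_n -> pred T)
  : option 'I_k -> pred T :=
  fun o => match o with
  | Some i => H (widen_ord hk i)
  | None => fun w => [exists i : 'I_k, H (widen_ord hk i) w]
  end.

Definition qdp (R : Type) (n k : nat) (hk : (k <= n)%N) (p : 'I_n -> R) (z : R)
  : option 'I_k -> R :=
  fun o => match o with Some i => p (widen_ord hk i) | None => z end.

Definition hamacher (R : fieldType) (x y : R) : R :=
  if (x == 0) && (y == 0) then 0 else x * y / (x + y - x * y).

Definition hamacherL (R : fieldType) (s : seq R) : R :=
  match s with [::] => 1 | x :: s' => foldl (@hamacher R) x s' end.

Definition lukasiewiczS (R : realDomainType) (s : seq R) : R :=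
  Num.min (\sum_(x <- s) x) 1.

(* Main.v *)
Require Import Defs.
From HB Require Import structures.
From mathcomp Require Import all_boot all_order all_algebra.
From mathcomp Require Import ring lra.
From Stdlib Require Import IndefiniteDescription.
Import Order.TTheory GRing.Theory Num.Theory.
Set Implicit Arguments. Unset Strict Implicit. Unset Printing Implicit Defensive.
Local Open Scope ring_scope.

Lemma wit_ge (R : realFieldType) (T : Type) (ws : seq (R * T)) (g : T -> R) (Q : pred T) :
  all (fun x => 0 <= x.1) ws -> 0 < \sum_(x <- ws) x.1 ->
  all (fun x => Q x.2) ws -> \sum_(x <- ws) x.1 * g x.2 = 0 ->
  exists2 w, Q w & 0 <= g w.
Proof.
move=> w0 wpos wQ wsum.
have [hs|nhs] := boolP (has (fun x => 0 <= g x.2) ws).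
  elim: ws wQ hs {w0 wpos wsum} => [|x ws IH] //= /andP[Qx wQ] /orP[gx|hs].
    by exists x.2.
  exact: IH.
suff : (\sum_(x <- ws) x.1 * g x.2 <= 0) /\ (0 < \sum_(x <- ws) x.1 -> \sum_(x <- ws) x.1 * g x.2 < 0).
  by case=> _ /(_ wpos); rewrite wsum ltxx.
elim: ws w0 nhs {wpos wsum wQ} => [|x ws IH] /=; first by rewrite !big_nil.
case/andP=> x0 w0; rewrite negb_or => /andP[gx nhs].
rewrite -ltNge in gx.
have [IH1 IH2] := IH w0 nhs.
rewrite !big_cons; split.
  have : x.1 * g x.2 <= 0 by rewrite mulr_ge0_le0 // ltW.
  lra.
move=> hpos.
have [x1|x1] := boolP (0 < x.1).
  have : x.1 * g x.2 < 0 by rewrite pmulr_rlt0.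
  lra.
have x10 : x.1 = 0 by apply/eqP; rewrite eq_le x0 andbT leNgt.
rewrite x10 mul0r add0r; apply: IH2; move: hpos; rewrite x10 add0r //.
Qed.

Lemma coh_ws (R : realFieldType) (T : Type) (I : finType) (E H : I -> pred T)
  (p : I -> R) (J : {set I}) (ws : seq (R * T)) :
  all (fun x => 0 <= x.1) ws -> 0 < \sum_(x <- ws) x.1 ->
  all (fun x => [exists i in J, H i x.2]) ws ->
  (forall i, i \in J -> \sum_(x <- ws) x.1 * ((H i x.2)%:R * ((E i x.2)%:R - p i)) = 0) ->
  forall s, (exists2 w, [exists i in J, H i w] & 0 <= gain E H p J s w) /\
            (exists2 w, [exists i in J, H i w] & gain E H p J s w <= 0).
Proof.
move=> w0 wpos wQ wc s.
have key : \sum_(x <- ws) x.1 * gain E H p J s x.2 = 0.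
  rewrite /gain.
  under eq_bigr do rewrite mulr_sumr.
  rewrite exchange_big /=; apply: big1 => i iJ.
  rewrite -[RHS](mulr0 (s i)) -[X in _ * X](wc i iJ) mulr_sumr; apply: eq_bigr => x _.
  ring.
split.
  exact: (wit_ge (Q := fun w => [exists i in J, H i w]) w0 wpos wQ key).
have key' : \sum_(x <- ws) x.1 * (- gain E H p J s x.2) = 0.
  by under eq_bigr do rewrite mulrN; rewrite sumrN key oppr0.
have [w Hw gw] := wit_ge (Q := fun w => [exists i in J, H i w]) (g := fun w => - gain E H p J s w) w0 wpos wQ key'.
by exists w; rewrite // -oppr_ge0.
Qed.

Lemma ham0 (R : fieldType) (s : seq R) : foldl (@hamacher R) 0 s = 0.
Proof.
elim: s => //= y s IH; suff -> : hamacher 0 y = 0 by [].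
by rewrite /hamacher eqxx /=; case: (y == 0) => //; rewrite mul0r mul0r.
Qed.

Lemma ham_zero (R : fieldType) (x : R) (s : seq R) :
  0 \in s -> foldl (@hamacher R) x s = 0.
Proof.
elim: s x => //= y s IH x; rewrite in_cons => /orP[/eqP <-|hs]; last exact: IH.
suff -> : hamacher x 0 = 0 by exact: ham0.
by rewrite /hamacher eqxx andbT; case: (x == 0) => //; rewrite mulr0 mul0r.
Qed.

Lemma ham_step (R : realFieldType) (a y : R) : 0 <= a -> 0 < y <= 1 ->
  hamacher (1 + a)^-1 y = (1 + (a + (1 - y) / y))^-1.
Proof.
move=> a0 /andP[y0 y1].
have a1 : 1 + a != 0 by rewrite gt_eqF //; lra.
rewrite /hamacher invr_eq0 (negbTE a1) /=.
have ay : 1 + a * y != 0 by rewrite gt_eqF //; nra.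
have yn : y != 0 by rewrite gt_eqF.
have d : (1 + a)^-1 + y - (1 + a)^-1 * y = (1 + a * y) / (1 + a) by field.
have ay2 : y + (a * y + (1 - y)) != 0 by rewrite gt_eqF //; nra.
by rewrite d; field; rewrite yn ay2 a1.
Qed.

Lemma ham_pos (R : realFieldType) (a : R) (s : seq R) : 0 <= a ->
  all (fun y => 0 < y <= 1) s ->
  foldl (@hamacher R) (1 + a)^-1 s = (1 + (a + \sum_(y <- s) (1 - y) / y))^-1.
Proof.
elim: s a => [|y s IH] a a0 /=; first by rewrite big_nil addr0.
case/andP=> hy hs; rewrite ham_step // IH //.
  by rewrite big_cons !addrA.
case/andP: hy => y0 y1; apply: addr_ge0 => //; apply: divr_ge0; lra.
Qed.

Lemma hamL_pos (R : realFieldType) (s : seq R) : s != [::] ->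
  all (fun y => 0 < y <= 1) s ->
  hamacherL s = (1 + \sum_(y <- s) (1 - y) / y)^-1.
Proof.
case: s => [|x s] // _ /= /andP[/andP[x0 x1] hs].
have xe : (1 + (1 - x) / x)^-1 = x.
  have xn : x != 0 by rewrite gt_eqF.
  by field; rewrite xn /=; apply: lt0r_neq0; nra.
rewrite -{1}xe ham_pos //; first by rewrite big_cons.
apply: divr_ge0; lra.
Qed.



Lemma eq_big_all (R : nmodType) (T : Type) (ws : seq T) (P : pred T) (F G : T -> R) :
  all P ws -> (forall x, P x -> F x = G x) -> \sum_(x <- ws) F x = \sum_(x <- ws) G x.
Proof.
move=> hP hFG; elim: ws hP => [|x ws IH] /=; first by rewrite !big_nil.
by case/andP=> Px hP; rewrite !big_cons hFG // IH.
Qed.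

Definition feas (R : realFieldType) (T : Type) (n : nat) (E H : 'I_n -> pred T)
  (p : 'I_n -> R) (k : nat) (hk : (k <= n)%N) (z : R) :=
  exists ws : seq (R * T),
    [/\ all (fun x => 0 <= x.1) ws, 0 < \sum_(x <- ws) x.1,
        all (fun x => qdH hk H None x.2) ws &
        forall o, \sum_(x <- ws) x.1 * ((qdH hk H o x.2)%:R *
                     ((qdE hk E H o x.2)%:R - qdp hk p z o)) = 0].

Lemma none_form (R : realFieldType) (T : Type) (n : nat) (E H : 'I_n -> pred T)
  (p : 'I_n -> R) (k : nat) (hk : (k <= n)%N) (z : R) (ws : seq (R * T)) :
  all (fun x => qdH hk H None x.2) ws ->
  \sum_(x <- ws) x.1 * ((qdH hk H None x.2)%:R * ((qdE hk E H None x.2)%:R - qdp hk p z None))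
  = \sum_(x <- ws) x.1 * (qdE hk E H None x.2)%:R - z * \sum_(x <- ws) x.1.
Proof.
move=> hw.
rewrite (@eq_big_all _ _ ws (fun x => qdH hk H None x.2) _
   (fun x => x.1 * (qdE hk E H None x.2)%:R - z * x.1)) //.
  by rewrite sumrB mulr_sumr.
by move=> x /= ->; rewrite mul1r; ring.
Qed.

Lemma feas_mix (R : realFieldType) (T : Type) (n : nat) (E H : 'I_n -> pred T)
  (p : 'I_n -> R) (k : nat) (hk : (k <= n)%N) (l u z : R) :
  l <= z <= u -> feas E H p hk l -> feas E H p hk u -> feas E H p hk z.
Proof.
case/andP=> lz zu fl fu.
have [lu|] := eqVneq l u.
  by have -> : z = l by apply/eqP; rewrite eq_le lz andbT lu.
move=> nlu; have ltu : l < u by rewrite lt_neqAle nlu /= (le_trans lz zu).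
case: fl => [ws1 [w10 w1p w1H w1c]]; case: fu => [ws2 [w20 w2p w2H w2c]].
set W1 := \sum_(x <- ws1) x.1 in w1p; set W2 := \sum_(x <- ws2) x.1 in w2p.
set c1 := (u - z) / W1; set c2 := (z - l) / W2.
have c10 : 0 <= c1 by apply: divr_ge0; lra.
have c20 : 0 <= c2 by apply: divr_ge0; lra.
have sc (c : R) (ws : seq (R * T)) (F : T -> R) :
   \sum_(x <- map (fun x => (c * x.1, x.2)) ws) x.1 * F x.2 = c * \sum_(x <- ws) x.1 * F x.2.
  by rewrite big_map mulr_sumr; apply: eq_bigr => x _ /=; rewrite mulrA.
exists (map (fun x => (c1 * x.1, x.2)) ws1 ++ map (fun x => (c2 * x.1, x.2)) ws2); split.
- rewrite all_cat !all_map; apply/andP; split.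
    by apply: sub_all w10 => x /= ?; rewrite mulr_ge0.
  by apply: sub_all w20 => x /= ?; rewrite mulr_ge0.
- rewrite big_cat !big_map /= -!mulr_sumr -/W1 -/W2 /c1 /c2.
  rewrite !divfK ?gt_eqF //; lra.
- by rewrite all_cat !all_map; apply/andP; split.
case=> [i|].
  rewrite big_cat /= (sc c1 ws1 (fun w => (qdH hk H (Some i) w)%:R * ((qdE hk E H (Some i) w)%:R - p (widen_ord hk i)))).
  rewrite (sc c2 ws2 (fun w => (qdH hk H (Some i) w)%:R * ((qdE hk E H (Some i) w)%:R - p (widen_ord hk i)))).
  by rewrite (w1c (Some i)) (w2c (Some i)) !mulr0 addr0.
rewrite none_form; last by rewrite all_cat !all_map; apply/andP; split.
have e1 := w1c None; have e2 := w2c None.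
rewrite none_form // in e1; rewrite none_form // in e2.
move: e1 e2; rewrite -/W1 -/W2 => e1 e2.
rewrite big_cat /= (sc c1 ws1 (fun w => (qdE hk E H None w)%:R)).
rewrite (sc c2 ws2 (fun w => (qdE hk E H None w)%:R)).
rewrite big_cat !big_map /= -!mulr_sumr -/W1 -/W2.
have -> : \sum_(x <- ws1) x.1 * (qdE hk E H None x.2)%:R = l * W1 by lra.
have -> : \sum_(x <- ws2) x.1 * (qdE hk E H None x.2)%:R = u * W2 by lra.
rewrite /c1 /c2; field.
by rewrite !gt_eqF.
Qed.


Lemma pt_ex (T : Type) (n : nat) (E H : 'I_n -> pred T) (k : nat) (hk : (k <= n)%N) :
  logically_independent E H -> forall f : 'I_k -> bool * bool,
  exists w, forall i, E (widen_ord hk i) w = (f i).1 /\ H (widen_ord hk i) w = (f i).2.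
Proof.
move=> li f.
have [w hw] := li (fun j => oapp f (false, false) (insub (nat_of_ord j))).
exists w => i; have := hw (widen_ord hk i).
by rewrite /= (_ : insub (nat_of_ord i) = Some i) //; rewrite valK.
Qed.

Definition onlyF k (j : 'I_k) (b : bool) : 'I_k -> bool * bool :=
  fun m => if m == j then (b, true) else (false, false).
Definition allF k (b : bool) : 'I_k -> bool * bool := fun _ => (b, true).
Definition allOE k (j : 'I_k) : 'I_k -> bool * bool := fun m => (m == j, true).


Lemma qdH_S (T : Type) (n : nat) (E H : 'I_n -> pred T) (k : nat) (hk : (k <= n)%N)
  (pt : ('I_k -> bool * bool) -> T)
  (hpt : forall f i, E (widen_ord hk i) (pt f) = (f i).1 /\ H (widen_ord hk i) (pt f) = (f i).2)
  f i : qdH hk H (Some i) (pt f) = (f i).2 /\ qdE hk E H (Some i) (pt f) = (f i).1.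
Proof. by have [a b] := hpt f i. Qed.

Lemma qdH_N (T : Type) (n : nat) (E H : 'I_n -> pred T) (k : nat) (hk : (k <= n)%N)
  (pt : ('I_k -> bool * bool) -> T)
  (hpt : forall f i, E (widen_ord hk i) (pt f) = (f i).1 /\ H (widen_ord hk i) (pt f) = (f i).2)
  f : qdH hk H None (pt f) = [exists i, (f i).2] /\
      qdE hk E H None (pt f) = [exists i, (f i).1 && (f i).2].
Proof.
split; apply: eq_existsb => i; have [a b] := hpt f i; by rewrite ?a b.
Qed.


Lemma feas_zero (R : realFieldType) (T : Type) (n : nat) (E H : 'I_n -> pred T)
  (p : 'I_n -> R) (k : nat) (hk : (k <= n)%N) (pt : ('I_k -> bool * bool) -> T)
  (hpt : forall f i, E (widen_ord hk i) (pt f) = (f i).1 /\ H (widen_ord hk i) (pt f) = (f i).2)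
  (j : 'I_k) : p (widen_ord hk j) = 0 -> feas E H p hk 0.
Proof.
move=> pj; exists [:: (1, pt (onlyF j false))]; split.
- by rewrite /= ler01.
- by rewrite big_cons big_nil addr0 ltr01.
- have [h _] := qdH_N hpt (onlyF j false); rewrite /= in h; rewrite /= andbT h.
  by apply/existsP; exists j; rewrite /onlyF eqxx.
case=> [i|]; rewrite big_cons big_nil addr0 mul1r.
  have [-> ->] := qdH_S hpt (onlyF j false) i.
  rewrite /onlyF /=; case: eqP => [->|_] /=; last by rewrite mul0r.
  by rewrite pj subr0 mulr0.
have [_ ->] := qdH_N hpt (onlyF j false).
rewrite (_ : [exists i, _] = false) /=; first by rewrite subr0 mulr0.
by apply/existsP; case=> i; rewrite /onlyF; case: (i == j).
Qed.

Lemma feas_one (R : realFieldType) (T : Type) (n : nat) (E H : 'I_n -> pred T)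
  (p : 'I_n -> R) (k : nat) (hk : (k <= n)%N) (pt : ('I_k -> bool * bool) -> T)
  (hpt : forall f i, E (widen_ord hk i) (pt f) = (f i).1 /\ H (widen_ord hk i) (pt f) = (f i).2)
  (j : 'I_k) : p (widen_ord hk j) = 1 -> feas E H p hk 1.
Proof.
move=> pj; exists [:: (1, pt (onlyF j true))]; split.
- by rewrite /= ler01.
- by rewrite big_cons big_nil addr0 ltr01.
- have [h _] := qdH_N hpt (onlyF j true); rewrite /= in h; rewrite /= andbT h.
  by apply/existsP; exists j; rewrite /onlyF eqxx.
case=> [i|]; rewrite big_cons big_nil addr0 mul1r.
  have [-> ->] := qdH_S hpt (onlyF j true) i.
  rewrite /onlyF /=; case: eqP => [->|_] /=; last by rewrite mul0r.
  by rewrite pj subrr mulr0.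
have [_ ->] := qdH_N hpt (onlyF j true).
rewrite (_ : [exists i, _] = true) /=; first by rewrite subrr mulr0.
by apply/existsP; exists j; rewrite /onlyF eqxx.
Qed.

Lemma qdpS (R : Type) (n k : nat) (hk : (k <= n)%N) (p : 'I_n -> R) (z : R) i :
  qdp hk p z (Some i) = p (widen_ord hk i).
Proof. by []. Qed.

Lemma qdpN (R : Type) (n k : nat) (hk : (k <= n)%N) (p : 'I_n -> R) (z : R) :
  qdp hk p z None = z.
Proof. by []. Qed.

Lemma feas_low (R : realFieldType) (T : Type) (n : nat) (E H : 'I_n -> pred T)
  (p : 'I_n -> R) (k : nat) (hk : (k <= n)%N) (pt : ('I_k -> bool * bool) -> T)
  (hpt : forall f i, E (widen_ord hk i) (pt f) = (f i).1 /\ H (widen_ord hk i) (pt f) = (f i).2) :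
  (0 < k)%N -> (forall j : 'I_k, 0 < p (widen_ord hk j) <= 1) ->
  feas E H p hk (1 + \sum_(j < k) (1 - p (widen_ord hk j)) / p (widen_ord hk j))^-1.
Proof.
move=> k0 hp.
set b := fun j : 'I_k => (1 - p (widen_ord hk j)) / p (widen_ord hk j).
have b0 j : 0 <= b j by have := hp j; case/andP=> ? ?; apply: divr_ge0; lra.
exists ((1, pt (@allF k true)) :: map (fun j => (b j, pt (onlyF j false))) (index_enum 'I_k)).
have HN : all (fun x => qdH hk H None x.2)
   ((1, pt (@allF k true)) :: map (fun j => (b j, pt (onlyF j false))) (index_enum 'I_k)).
  rewrite /= all_map; apply/andP; split.
    have [h _] := qdH_N hpt (@allF k true); rewrite /= in h; rewrite /= h.
    by apply/existsP; exists (Ordinal k0).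
  apply/allP => j _ /=.
  have [h _] := qdH_N hpt (onlyF j false); rewrite /= in h; rewrite h.
  by apply/existsP; exists j; rewrite /onlyF eqxx.
have S0 : 0 <= \sum_(j < k) b j by apply: sumr_ge0 => j _.
split => //.
- rewrite /= ler01 all_map /=; by apply/allP => j _ /=.
- rewrite big_cons big_map /=; rewrite -/(\sum_(j < k) b j); lra.
case=> [i|].
  rewrite big_cons big_map mul1r qdpS.
  have [h e] := qdH_S hpt (@allF k true) i; rewrite h e.
  rewrite (bigD1 i) // big1; last first.
    move=> j ji; have [h' e'] := qdH_S hpt (onlyF j false) i ; rewrite h' /onlyF.
    by rewrite eq_sym (negbTE ji) mul0r mulr0.
  have [h' e'] := qdH_S hpt (onlyF i false) i; rewrite h' e' /onlyF eqxx /=.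
  have pi0 : p (widen_ord hk i) != 0 by have := hp i; case/andP=> ? ?; rewrite gt_eqF.
  rewrite /b /allF /=; field; exact: pi0.
rewrite none_form // big_cons big_map /=.
have [_ e] := qdH_N hpt (@allF k true); rewrite /= in e; rewrite e.
rewrite (_ : [exists i : 'I_k, true] = true); last by apply/existsP; exists (Ordinal k0).
rewrite big1; last first.
  move=> j _; have [_ e'] := qdH_N hpt (onlyF j false); rewrite /= in e'; rewrite e'.
  rewrite (_ : [exists i, _] = false) ?mulr0 //.
  by apply/existsP; case=> i; rewrite /onlyF; case: (i == j).
rewrite big_cons big_map /= -/(\sum_(j < k) b j) mulr1 addr0 mulVf //.
  by rewrite subrr.
by rewrite gt_eqF //; lra.
Qed.

Lemma all_consE (A : Type) (P : pred A) x s : all P (x :: s) = P x && all P s.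
Proof. by []. Qed.

Lemma qdHS (T : Type) (n : nat) (E H : 'I_n -> pred T) (k : nat) (hk : (k <= n)%N)
  (pt : ('I_k -> bool * bool) -> T)
  (hpt : forall f i, E (widen_ord hk i) (pt f) = (f i).1 /\ H (widen_ord hk i) (pt f) = (f i).2)
  f i : qdH hk H (Some i) (pt f) = (f i).2.
Proof. by have [] := qdH_S hpt f i. Qed.
Lemma qdES (T : Type) (n : nat) (E H : 'I_n -> pred T) (k : nat) (hk : (k <= n)%N)
  (pt : ('I_k -> bool * bool) -> T)
  (hpt : forall f i, E (widen_ord hk i) (pt f) = (f i).1 /\ H (widen_ord hk i) (pt f) = (f i).2)
  f i : qdE hk E H (Some i) (pt f) = (f i).1.
Proof. by have [] := qdH_S hpt f i. Qed.
Lemma qdHN (T : Type) (n : nat) (E H : 'I_n -> pred T) (k : nat) (hk : (k <= n)%N)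
  (pt : ('I_k -> bool * bool) -> T)
  (hpt : forall f i, E (widen_ord hk i) (pt f) = (f i).1 /\ H (widen_ord hk i) (pt f) = (f i).2)
  f : qdH hk H None (pt f) = [exists i, (f i).2].
Proof. by have [] := qdH_N hpt f. Qed.
Lemma qdEN (T : Type) (n : nat) (E H : 'I_n -> pred T) (k : nat) (hk : (k <= n)%N)
  (pt : ('I_k -> bool * bool) -> T)
  (hpt : forall f i, E (widen_ord hk i) (pt f) = (f i).1 /\ H (widen_ord hk i) (pt f) = (f i).2)
  f : qdE hk E H None (pt f) = [exists i, (f i).1 && (f i).2].
Proof. by have [] := qdH_N hpt f. Qed.

Lemma feas_us (R : realFieldType) (T : Type) (n : nat) (E H : 'I_n -> pred T)
  (p : 'I_n -> R) (k : nat) (hk : (k <= n)%N) (pt : ('I_k -> bool * bool) -> T)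
  (hpt : forall f i, E (widen_ord hk i) (pt f) = (f i).1 /\ H (widen_ord hk i) (pt f) = (f i).2) :
  (0 < k)%N -> (forall j : 'I_k, 0 <= p (widen_ord hk j)) ->
  \sum_(j < k) p (widen_ord hk j) <= 1 ->
  feas E H p hk (\sum_(j < k) p (widen_ord hk j)).
Proof.
move=> k0 hp hS.
set S := \sum_(j < k) p (widen_ord hk j) in hS *.
exists ((1 - S, pt (@allF k false)) :: map (fun j => (p (widen_ord hk j), pt (allOE j))) (index_enum 'I_k)).
have HN : all (fun x => qdH hk H None x.2)
   ((1 - S, pt (@allF k false)) :: map (fun j => (p (widen_ord hk j), pt (allOE j))) (index_enum 'I_k)).
  rewrite all_consE all_map; apply/andP; split.
    by rewrite (qdHN hpt); apply/existsP; exists (Ordinal k0).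
  by apply/allP => j _ /=; apply/existsP; exists j; rewrite (proj2 (hpt _ j)).
split => //.
- rewrite /= all_map subr_ge0 hS /=; by apply/allP => j _ /=.
- rewrite big_cons big_map /= -/S; lra.
case=> [i|].
  rewrite big_cons big_map qdpS (qdHS hpt) (qdES hpt) /allF /=.
  under eq_bigr => j _ do rewrite (proj1 (hpt _ i)) (proj2 (hpt _ i)) /allOE /= mul1r mulrBr.
  rewrite sumrB -mulr_suml -/S (bigD1 i) //= eqxx big1; last first.
    by move=> j ji; rewrite eq_sym (negbTE ji) mulr0.
  rewrite /=; ring.
rewrite none_form // big_cons big_map /=.
rewrite (_ : [exists i, E _ (pt (allF false)) && _] = false); last first.
  by apply/existsP; case=> i; rewrite (proj1 (hpt _ i)).
rewrite (eq_bigr (fun j => p (widen_ord hk j))); last first.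
  move=> j _; rewrite (_ : [exists i, _] = true) ?mulr1 //.
  by apply/existsP; exists j; rewrite (proj1 (hpt _ j)) (proj2 (hpt _ j)) /allOE eqxx.
rewrite -/S big_cons big_map /= -/S; ring.
Qed.

Lemma feas_ub (R : realFieldType) (T : Type) (n : nat) (E H : 'I_n -> pred T)
  (p : 'I_n -> R) (k : nat) (hk : (k <= n)%N) (pt : ('I_k -> bool * bool) -> T)
  (hpt : forall f i, E (widen_ord hk i) (pt f) = (f i).1 /\ H (widen_ord hk i) (pt f) = (f i).2) :
  (0 < k)%N -> (forall j : 'I_k, 0 <= p (widen_ord hk j) < 1) ->
  1 <= \sum_(j < k) p (widen_ord hk j) -> feas E H p hk 1.
Proof.
move=> k0 hp hS.
set S := \sum_(j < k) p (widen_ord hk j) in hS *.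
set q := fun j : 'I_k => p (widen_ord hk j).
set y := fun j : 'I_k => (q j - q j / S) / (1 - q j).
have S0 : S != 0 by rewrite gt_eqF //; lra.
have y0 j : 0 <= y j.
  have /andP[h1 h2] := hp j; apply: divr_ge0; last by rewrite /q; lra.
  have : q j / S <= q j by rewrite ler_pdivrMr ?(lt_le_trans ltr01) //; rewrite /q; nra.
  lra.
set ws := map (fun j => (q j / S, pt (allOE j))) (index_enum 'I_k) ++
          map (fun j => (y j, pt (onlyF j true))) (index_enum 'I_k).
exists ws.
have HN : all (fun x => qdH hk H None x.2) ws.
  rewrite all_cat !all_map; apply/andP; split; apply/allP => j _ /=;
    apply/existsP; exists j; rewrite (proj2 (hpt _ j)) //.
  by rewrite /onlyF eqxx.
have Sq : \sum_(j < k) q j / S = 1 by rewrite -mulr_suml divff.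
split => //.
- rewrite all_cat !all_map; apply/andP; split; apply/allP => j _ //=.
  have /andP[h1 h2] := hp j; apply: divr_ge0 => //; lra.
- rewrite big_cat !big_map /= Sq.
  have : 0 <= \sum_(j < k) y j by apply: sumr_ge0.
  lra.
case=> [i|].
  rewrite big_cat !big_map /=.
  under eq_bigr => j _ do rewrite (proj1 (hpt _ i)) (proj2 (hpt _ i)) /allOE /= mul1r mulrBr.
  under [X in _ + X]eq_bigr => j _ do rewrite (proj1 (hpt _ i)) (proj2 (hpt _ i)) /onlyF /=.
  rewrite sumrB -mulr_suml Sq (bigD1 i) //= eqxx big1; last first.
    by move=> j ji; rewrite eq_sym (negbTE ji) mulr0.
  rewrite (bigD1 i) //= eqxx big1; last first.
    by move=> j ji; rewrite eq_sym (negbTE ji) /= mul0r mulr0.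
  have q1 : 1 - q i != 0 by have /andP[h1 h2] := hp i; rewrite gt_eqF // /q; lra.
  rewrite /y /=; move: q1; rewrite /q => q1; field; by rewrite S0 q1.
rewrite big_cat !big_map /= big1; last first.
  move=> j _.
  rewrite (_ : [exists i, H (widen_ord hk i) (pt (allOE j))] = true); last first.
    by apply/existsP; exists j; rewrite (proj2 (hpt _ j)).
  rewrite (_ : [exists i, E (widen_ord hk i) (pt (allOE j)) && H (widen_ord hk i) (pt (allOE j))] = true); last first.
    by apply/existsP; exists j; rewrite (proj1 (hpt _ j)) (proj2 (hpt _ j)) /allOE eqxx.
  by rewrite subrr !mulr0.
rewrite big1 ?add0r //.
move=> j _.
rewrite (_ : [exists i, H (widen_ord hk i) (pt (onlyF j true))] = true); last first.
  by apply/existsP; exists j; rewrite (proj2 (hpt _ j)) /onlyF eqxx.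
rewrite (_ : [exists i, E (widen_ord hk i) (pt (onlyF j true)) && H (widen_ord hk i) (pt (onlyF j true))] = true); last first.
  by apply/existsP; exists j; rewrite (proj1 (hpt _ j)) (proj2 (hpt _ j)) /onlyF eqxx.
by rewrite subrr !mulr0.
Qed.



Lemma sum_option (R : nmodType) (I : finType) (F : option I -> R) :
  \sum_(o : option I) F o = F None + \sum_(i : I) F (Some i).
Proof.
rewrite (bigD1 None) //=; congr (_ + _).
rewrite (reindex_omap Some id) //=; last by case.
by apply: eq_bigl => j; rewrite eqxx.
Qed.

Lemma sum_enum_map (R : realFieldType) (k : nat) (F : 'I_k -> R) (G : R -> R) :
  \sum_(x <- [seq F i | i <- enum 'I_k]) G x = \sum_(j < k) G (F j).
Proof. by rewrite big_map big_enum. Qed.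

Lemma hamL_zero (R : fieldType) (s : seq R) : 0 \in s -> hamacherL s = 0.
Proof.
case: s => [|x s] //=; rewrite in_cons => /orP[/eqP <-|hs]; first exact: ham0.
exact: ham_zero.
Qed.

Lemma hD_of (T : Type) (n : nat) (E H : 'I_n -> pred T) (k : nat) (hk : (k <= n)%N)
  (J : {set option 'I_k}) w :
  [exists o in J, qdH hk H o w] -> qdH hk H None w.
Proof. by case/existsP => -[i|] /andP[_ h] //; apply/existsP; exists i. Qed.

Lemma gain_T (R : realFieldType) (T : Type) (n : nat) (E H : 'I_n -> pred T)
  (p : 'I_n -> R) (k : nat) (hk : (k <= n)%N) z (st : option 'I_k -> R) w :
  gain (qdE hk E H) (qdH hk H) (qdp hk p z) setT st w =
  st None * (qdH hk H None w)%:R * ((qdE hk E H None w)%:R - z) +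
  \sum_(i < k) st (Some i) * (H (widen_ord hk i) w)%:R * ((E (widen_ord hk i) w)%:R - p (widen_ord hk i)).
Proof.
rewrite /gain (eq_bigl (fun _ => true)); last by move=> o; rewrite inE.
by rewrite sum_option.
Qed.

Lemma minr_l' (R : realFieldType) (x y : R) : x <= y -> Num.min x y = x.
Proof.
move=> h; rewrite /Num.min; case: ifP => // /negbT; rewrite -leNgt => h'.
by apply/eqP; rewrite eq_le h h'.
Qed.

Lemma minr_r' (R : realFieldType) (x y : R) : y <= x -> Num.min x y = y.
Proof.
by move=> h; rewrite /Num.min; case: ifP => // xy; move: (lt_le_trans xy h); rewrite ltxx.
Qed.

Lemma gt_minr' (R : realFieldType) (x y z : R) : Num.min x y < z -> x < z \/ y < z.
Proof. by rewrite /Num.min; case: ifP => _ h; [left|right]. Qed.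

Unset Implicit Arguments.

Theorem theorem8 (R : realFieldType) (T : Type) (n : nat)
  (E H : 'I_n -> pred T) (p : 'I_n -> R) :
  logically_independent E H ->
  (forall i, 0 <= p i <= 1) ->
  forall (k : nat) (hk : (k <= n)%N), (2 <= k)%N ->
  forall z : R,
    coherent (qdE hk E H) (qdH hk H) (qdp hk p z) <->
    hamacherL [seq p (widen_ord hk i) | i <- enum 'I_k] <= z <=
    lukasiewiczS [seq p (widen_ord hk i) | i <- enum 'I_k].
Proof.
move=> li hp k hk k2 z.
have k0 : (0 < k)%N by apply: leq_trans k2.
have ex := pt_ex hk li.
pose pt := fun f => proj1_sig (constructive_indefinite_description _ (ex f)).
have hpt : forall f i, E (widen_ord hk i) (pt f) = (f i).1 /\ H (widen_ord hk i) (pt f) = (f i).2.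
  by move=> f; exact: (proj2_sig (constructive_indefinite_description _ (ex f))).
set s := [seq p (widen_ord hk i) | i <- enum 'I_k].
set S := \sum_(j < k) p (widen_ord hk j).
have hu : lukasiewiczS s = Num.min S 1.
  by rewrite /lukasiewiczS (sum_enum_map _ (fun x => x)).
have hcase : (forall j : 'I_k, 0 < p (widen_ord hk j)) \/
                         (exists j : 'I_k, p (widen_ord hk j) = 0).
  case: (boolP [forall j : 'I_k, 0 < p (widen_ord hk j)]) => [/forallP h|/forallPn [j hj]].
    by left.
  right; exists j; have /andP[h0 _] := hp (widen_ord hk j).
  by apply/eqP; rewrite eq_le h0 andbT leNgt.
have hsn : s != [::].
  apply/eqP => /(congr1 size); rewrite size_map size_enum_ord => k00.
  by rewrite k00 in k0.
have hlpos : (forall j : 'I_k, 0 < p (widen_ord hk j)) ->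
   hamacherL s = (1 + \sum_(j < k) (1 - p (widen_ord hk j)) / p (widen_ord hk j))^-1.
  move=> allpos; rewrite hamL_pos //; last first.
    rewrite all_map; apply/allP => j _ /=; rewrite allpos /=.
    by have /andP[] := hp (widen_ord hk j).
  by rewrite (sum_enum_map _ (fun y => (1 - y) / y)).
have hlzero : (exists j : 'I_k, p (widen_ord hk j) = 0) -> hamacherL s = 0.
  case=> j pj; apply: hamL_zero; apply/mapP; exists j; first by rewrite mem_enum.
  by rewrite pj.
have fl : feas E H p hk (hamacherL s).
  case: hcase => [allpos|[j pj]].
    rewrite hlpos //; apply: feas_low hpt k0 _ => j.
    by rewrite allpos; have /andP[] := hp (widen_ord hk j).
  rewrite hlzero; last by exists j.
  exact (feas_zero hpt pj).
have fu : feas E H p hk (lukasiewiczS s).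
  rewrite hu; case: (lerP S 1) => hS.
    apply: feas_us hpt k0 _ hS => j.
    by have /andP[] := hp (widen_ord hk j).
 
  case: (boolP [exists j : 'I_k, p (widen_ord hk j) == 1]) => [/existsP [j /eqP pj]|/existsPn h1].
    exact (feas_one hpt pj).
  apply: feas_ub hpt k0 _ (ltW hS) => j.
  have /andP[h0 h1'] := hp (widen_ord hk j); rewrite h0 /= lt_neqAle h1' andbT.
  exact: h1.
have setT0 : [set: option 'I_k] != set0 by apply/set0Pn; exists None; rewrite inE.
have set10 : [set None : option 'I_k] != set0 by apply/set0Pn; exists None; rewrite inE.
split; last first.
  move=> hz J st hJ.
  have [ws [w0 wp wH wc]] := feas_mix hz fl fu.
  case: (boolP (None \in J)) => hN.
    apply: coh_ws w0 wp _ (fun o _ => wc o) st.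
    apply: sub_all wH => x hx; apply/existsP; exists None; by rewrite hN.
  case/set0Pn: hJ => -[j|] oJ; last by rewrite oJ in hN.
  have /andP[pj0 pj1] := hp (widen_ord hk j).
  apply: (@coh_ws _ _ _ _ _ _ J [:: (p (widen_ord hk j), pt (onlyF j true));
                                  (1 - p (widen_ord hk j), pt (onlyF j false))]).
  - by rewrite /= pj0 subr_ge0 pj1.
  - by rewrite !big_cons big_nil addr0 addrC subrK ltr01.
  - by rewrite /=; apply/and3P; split => //; apply/existsP; exists (Some j);
      rewrite oJ /= (proj2 (hpt _ j)) /onlyF eqxx.
  move=> [i|] iJ; last by rewrite iJ in hN.
  rewrite !big_cons big_nil /= !(proj1 (hpt _ i)) !(proj2 (hpt _ i)) /onlyF.
  case: eqP => [->|_] /=; last by rewrite !mul0r !mulr0 !addr0.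
  ring.
move=> coh; apply/andP; split.
  rewrite leNgt; apply/negP => zl.
  case: hcase => [allpos|hz0]; last first.
    rewrite hlzero // in zl.
    have [_ [w hw g]] := coh [set None] (fun _ => 1) set10.
    have hD := hD_of E hw; move: g; rewrite /gain big_set1 hD /= mul1r mul1r.
    by set e := [exists i, _]; case: e => /=; lra.
  rewrite hlpos // in zl.
  set b := \sum_(j < k) (1 - p (widen_ord hk j)) / p (widen_ord hk j) in zl.
  have b0 : 0 <= b.
    apply: sumr_ge0 => j _; apply: divr_ge0; last exact: ltW.
    by have /andP[] := hp (widen_ord hk j); rewrite subr_ge0.
  set l := (1 + b)^-1 in zl.
  have lb : l + l * b = 1.
    have b1 : 1 + b != 0 by rewrite gt_eqF //; lra.
    by rewrite /l; field.
  have l0 : 0 < l by rewrite /l invr_gt0; lra.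
  have [_ [w hw g]] := coh setT
     (fun o => if o is Some i then - (l / p (widen_ord hk i)) else 1) setT0.
  have hD := hD_of E hw; move: g; rewrite gain_T hD.
  case: (boolP (qdE hk E H None w)) => eD; rewrite ?eD ?(negbTE eD) /= !mul1r.
    have : - (l * b) <= \sum_(i < k) - (l / p (widen_ord hk i)) * (H (widen_ord hk i) w)%:R *
        ((E (widen_ord hk i) w)%:R - p (widen_ord hk i)).
      rewrite /b mulr_sumr -sumrN; apply: ler_sum => i _.
      have pi := allpos i; have /andP[_ pi1] := hp (widen_ord hk i).
      case: (H (widen_ord hk i) w); case: (E (widen_ord hk i) w) => /=.
      + rewrite mulr1 le_eqVlt; apply/orP; left; apply/eqP; field.
        by rewrite gt_eqF.
      + rewrite mulr1 sub0r mulrNN divfK ?gt_eqF //.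
        have : 0 <= l * ((1 - p (widen_ord hk i)) / p (widen_ord hk i)).
          by apply: mulr_ge0; [exact: ltW | apply: divr_ge0; [lra | exact: ltW]].
        lra.
      + rewrite mulr0 mul0r oppr_le0; apply: mulr_ge0; first exact: ltW.
        by apply: divr_ge0; [lra | exact: ltW].
      + rewrite mulr0 mul0r oppr_le0; apply: mulr_ge0; first exact: ltW.
        by apply: divr_ge0; [lra | exact: ltW].
    lra.
  have := hD; rewrite /= => /existsP [j hj].
  have tpos i : 0 <= - (l / p (widen_ord hk i)) * (H (widen_ord hk i) w)%:R *
        ((E (widen_ord hk i) w)%:R - p (widen_ord hk i)).
    have pi := allpos i.
    case hHi : (H (widen_ord hk i) w); last by rewrite mulr0 mul0r.
    have -> : E (widen_ord hk i) w = false.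
      apply/negP => hEi; move/negP: eD; apply; apply/existsP; exists i.
      by rewrite /= hEi hHi.
    rewrite /= mulr1 sub0r mulrNN divfK ?gt_eqF //; exact: ltW.
  have : l <= \sum_(i < k) - (l / p (widen_ord hk i)) * (H (widen_ord hk i) w)%:R *
        ((E (widen_ord hk i) w)%:R - p (widen_ord hk i)).
    rewrite (bigD1 j) //=.
    have -> : E (widen_ord hk j) w = false.
      apply/negP => hEj; move/negP: eD; apply; apply/existsP; exists j.
      by rewrite /= hEj hj.
    rewrite hj /= mulr1 sub0r mulrNN divfK ?gt_eqF ?allpos //.
    have : 0 <= \sum_(i < k | i != j) - (l / p (widen_ord hk i)) * (H (widen_ord hk i) w)%:R *
        ((E (widen_ord hk i) w)%:R - p (widen_ord hk i)) by apply: sumr_ge0 => i _.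
    lra.
  lra.
rewrite leNgt; apply/negP => uz; rewrite hu in uz.
case: (lerP z 1) => z1; last first.
  have [[w hw g] _] := coh [set None] (fun _ => 1) set10.
  have hD := hD_of E hw; move: g; rewrite /gain big_set1 hD /= mul1r mul1r.
  by set e := [exists i, _]; case: e => /=; lra.
have Sz : S < z by case: (gt_minr' uz) => // h; lra.
have [[w hw g] _] := coh setT (fun o => if o is Some _ then -1 else 1) setT0.
have hD := hD_of E hw; move: g; rewrite gain_T hD.
have A : (qdE hk E H None w)%:R <= \sum_(i < k) (H (widen_ord hk i) w)%:R * (E (widen_ord hk i) w)%:R :> R.
  have s0 : forall P : pred 'I_k, 0 <= \sum_(i < k | P i) (H (widen_ord hk i) w)%:R * (E (widen_ord hk i) w)%:R :> R.
    by move=> P; apply: sumr_ge0 => i _; rewrite mulr_ge0.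
  case: (boolP (qdE hk E H None w)) => eD; last exact: s0.
  move: (eD); rewrite /= => /existsP [j /andP[ej hj]].
  rewrite (bigD1 j) //= ej hj /= mulr1.
  have := s0 (fun i => i != j); lra.
have B : \sum_(i < k) -1 * (H (widen_ord hk i) w)%:R * ((E (widen_ord hk i) w)%:R - p (widen_ord hk i))
   <= \sum_(i < k) (- ((H (widen_ord hk i) w)%:R * (E (widen_ord hk i) w)%:R) + p (widen_ord hk i)).
  apply: ler_sum => i _; have /andP[pi0 _] := hp (widen_ord hk i).
  by case: (H (widen_ord hk i) w); case: (E (widen_ord hk i) w) => /=; lra.
rewrite big_split /= sumrN -/S in B.
rewrite !mul1r => g.
lra.
Qed.
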